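(* For all $m\geq 2$ and $n\geq 1$, \[ s_{n,m}(211,213)=\frac14\Big(\big(2-m\sqrt2\big)\big(1-\sqrt2\big)^{n-1}+\big(2+m\sqrt2\big)\big(1+\sqrt2\big)^{n-1}\Big). \]
   Context: $[n]_m=\{1^m,\ldots,n^m\}$; a permutation of $[n]_m$ is a sequence of length $nm$ in which each element of $[n]$ appears exactly $m$ times. A sequence avoids a pattern $\pi$ if it has no subsequence order-isomorphic to $\pi$ (same relative order and same equalities among entries). $s_{n,m}(\Pi)$ is the number of permutations of $[n]_m$ avoiding all patterns in $\Pi$. *)

(* Defs.v *)
From HB Require Import structures.
From mathcomp Require Import all_boot all_order all_algebra.
Set Implicit Arguments. Unset Strict Implicit. Unset Printing Implicit Defensive.

Definition multiset_nm (n m : nat) : seq nat :=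
  flatten [seq nseq m i | i <- iota 1 n].

Definition order_iso (s p : seq nat) : bool :=
  (size s == size p) &&
  [forall i : 'I_(size p), forall j : 'I_(size p),
     ((nth 0 s i < nth 0 s j) == (nth 0 p i < nth 0 p j)) &&
     ((nth 0 s i == nth 0 s j) == (nth 0 p i == nth 0 p j))].

Definition contains (w p : seq nat) : bool :=
  [exists b : (size w).-tuple bool, order_iso (mask b w) p].

Definition avoids_all (Pi : seq (seq nat)) (w : seq nat) : bool :=
  all (fun p => ~~ contains w p) Pi.

(* s_{n,m}(Pi): number of permutations of [n]_m avoiding every pattern in Pi.
   [permutations t] is the duplicate-free list of all rearrangements of t. *)
Definition s_nm (n m : nat) (Pi : seq (seq nat)) : nat :=
  count (avoids_all Pi) (permutations (multiset_nm n m)).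

(* Main.v *)
Require Import Defs.
From HB Require Import structures.
From mathcomp Require Import all_boot all_order all_algebra.
From mathcomp Require Import zify ring.

Definition cond (x y z : nat) : bool := (y < x) && ((z == y) || (x < z)).
Definition bad (w : seq nat) : Prop :=
  exists x y z, subseq [:: x; y; z] w /\ cond x y z.

Lemma forall_ord3 (P : 'I_3 -> bool) :
  [forall i : 'I_3, P i] = [&& P (@Ordinal 3 0 isT), P (@Ordinal 3 1 isT) & P (@Ordinal 3 2 isT)].
Proof.
apply/forallP/and3P => [H|[H0 H1 H2]]; first by split; apply: H.
case=> [[|[|[|i]]] Hi]; try by [].
- by rewrite (bool_irrelevance Hi isT).
- by rewrite (bool_irrelevance Hi isT).
- by rewrite (bool_irrelevance Hi isT).
Qed.

Lemma oiso3 x y z p :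
  size p = 3 ->
  order_iso [:: x; y; z] p =
  [&& ((x < y) == (nth 0 p 0 < nth 0 p 1)), ((x == y) == (nth 0 p 0 == nth 0 p 1)),
      ((y < x) == (nth 0 p 1 < nth 0 p 0)),
      ((x < z) == (nth 0 p 0 < nth 0 p 2)), ((x == z) == (nth 0 p 0 == nth 0 p 2)),
      ((z < x) == (nth 0 p 2 < nth 0 p 0)),
      ((y < z) == (nth 0 p 1 < nth 0 p 2)), ((y == z) == (nth 0 p 1 == nth 0 p 2))
    & ((z < y) == (nth 0 p 2 < nth 0 p 1))].
Proof.
case: p => [|a [|b [|c [|d p]]]] //= _.
rewrite /order_iso /= forall_ord3 /= !forall_ord3 /= !ltnn !eqxx /=.
rewrite ![y == x]eq_sym ![z == x]eq_sym ![z == y]eq_sym ![b == a]eq_sym ![c == a]eq_sym ![c == b]eq_sym.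
rewrite !andbT.
move: ((x < y) == (a < b)) ((x == y) == (a == b)) ((y < x) == (b < a)) ((x < z) == (a < c))
  ((x == z) == (a == c)) ((z < x) == (c < a)) ((y < z) == (b < c)) ((y == z) == (b == c))
  ((z < y) == (c < b)) => [] [] [] [] [] [] [] [] [] //.
Qed.

Lemma oiso211 x y z : order_iso [:: x; y; z] [:: 2; 1; 1] = (y < x) && (z == y).
Proof.
rewrite oiso3 //=.
case: (ltngtP x y) => Hxy /=; case: (ltngtP x z) => Hxz /=; case: (ltngtP y z) => Hyz //=;
  try lia; by rewrite ?Hxy ?Hxz ?Hyz ?eqxx.
Qed.

Lemma oiso213 x y z : order_iso [:: x; y; z] [:: 2; 1; 3] = (y < x) && (x < z).
Proof.
rewrite oiso3 //=.
case: (ltngtP x y) => Hxy /=; case: (ltngtP x z) => Hxz /=; case: (ltngtP y z) => Hyz //=;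
  try lia; by rewrite ?Hxy ?Hxz ?Hyz ?eqxx.
Qed.

Lemma containsP3 w p : size p = 3 ->
  contains w p <-> exists x y z, subseq [:: x; y; z] w /\ order_iso [:: x; y; z] p.
Proof.
move=> sp; split.
- case/existsP => b ob.
  have : size (mask b w) = 3 by move: ob => /andP[/eqP]; rewrite sp.
  case E: (mask b w) => [|x [|y [|z [|t s]]]] //= _.
  exists x, y, z; split; last by rewrite -E.
  by rewrite -E mask_subseq.
- case=> x [y [z [/subseqP [b sb E] oi]]].
  apply/existsP; exists (Tuple (introT eqP sb)) => /=.
  by rewrite -E.
Qed.

Lemma avoidsE w :
  avoids_all [:: [:: 2; 1; 1]; [:: 2; 1; 3]] w <-> ~ bad w.
Proof.
rewrite /avoids_all /= andbT; split.
- move=> /andP[/negP H1 /negP H2] [x [y [z [sw c]]]].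
  move: c; rewrite /cond => /andP[yx /orP[zy|xz]].
  + apply: H1; apply/containsP3 => //; exists x, y, z; split => //.
    by rewrite oiso211 yx zy.
  + apply: H2; apply/containsP3 => //; exists x, y, z; split => //.
    by rewrite oiso213 yx xz.
- move=> nb; apply/andP; split; apply/negP.
  + case/containsP3 => // x [y [z [sw]]]; rewrite oiso211 => /andP[yx zy].
    by apply: nb; exists x, y, z; rewrite /cond yx zy.
  + case/containsP3 => // x [y [z [sw]]]; rewrite oiso213 => /andP[yx xz].
    by apply: nb; exists x, y, z; rewrite /cond yx xz orbT.
Qed.


Lemma nbad_nil : ~ bad [::].
Proof. by case=> x [y [z []]]. Qed.

Lemma bad_sub s w : subseq s w -> bad s -> bad w.
Proof.
move=> sw [x [y [z [ss c]]]]; exists x, y, z; split => //.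
exact: subseq_trans ss sw.
Qed.

Lemma bad_cons a w :
  bad (a :: w) <-> (exists y z, subseq [:: y; z] w /\ cond a y z) \/ bad w.
Proof.
split.
- case=> x [y [z [ss c]]]; rewrite /= in ss.
  have [exa|nxa] := eqVneq x a.
  + by subst x; left; exists y, z; rewrite eqxx in ss.
  + by right; exists x, y, z; rewrite (negbTE nxa) in ss.
- case=> [[y [z [ss c]]]|].
  + by exists a, y, z; rewrite /= eqxx.
  + by apply: bad_sub; apply: subseq_cons.
Qed.

Lemma bad_map_succ w : bad (map succn w) <-> bad w.
Proof.
split.
- case=> x [y [z [ss c]]].
  have mx : x \in map succn w by apply: (mem_subseq ss); rewrite !inE eqxx.
  have my : y \in map succn w by apply: (mem_subseq ss); rewrite !inE eqxx orbT.
  have mz : z \in map succn w by apply: (mem_subseq ss); rewrite !inE eqxx !orbT.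
  case/mapP: mx => x' _ ex; case/mapP: my => y' _ ey; case/mapP: mz => z' _ ez.
  exists x', y', z'; split.
  + by have := map_subseq predn ss; rewrite (mapK succnK) ex ey ez.
  + by move: c; rewrite /cond ex ey ez !ltnS eqSS.
- case=> x [y [z [ss c]]]; exists x.+1, y.+1, z.+1; split.
  + exact: (map_subseq succn ss).
  + by move: c; rewrite /cond !ltnS eqSS.
Qed.

Lemma sub_rcons (t s : seq nat) z c :
  subseq (rcons t z) (rcons s c) = subseq (rcons t z) s || subseq t s && (z == c).
Proof.
elim: s t => [|d s IH] [|x t] /=.
- by case: (z == c).
- by case: (x == c); case: t.
- by case: (z == d); rewrite ?sub0seq // !sub1seq mem_rcons in_cons orbC.
- case: (x == d); first exact: IH.
  exact: (IH (x :: t)).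
Qed.

Lemma bad_snoc s c :
  bad (rcons s c) <-> bad s \/ exists x y, subseq [:: x; y] s /\ cond x y c.
Proof.
split.
- case=> x [y [z [ss cc]]].
  move: ss; rewrite -[ [:: x; y; z] ]/(rcons [:: x; y] z) sub_rcons => /orP[ss|/andP[ss /eqP ez]].
  + by left; exists x, y, z.
  + by right; exists x, y; rewrite -ez.
- case=> [|[x [y [ss cc]]]].
  + by apply: bad_sub; apply: subseq_rcons.
  + exists x, y, c; split => //.
    by rewrite -[ [:: x; y; c] ]/(rcons [:: x; y] c) sub_rcons ss eqxx orbT.
Qed.

Lemma sub2_nseq (k a y z : nat) (t : seq nat) :
  subseq [:: y; z] (nseq k a ++ t) -> y != a -> subseq [:: y; z] t.
Proof. by elim: k => //= k IH; move=> ss ya; rewrite (negbTE ya) in ss; apply: IH. Qed.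

Lemma sub2_split (y z : nat) (t r : seq nat) :
  y \notin t -> subseq [:: y; z] (t ++ y :: r) -> z \in r.
Proof.
elim: t => [|d t IH] /=; first by rewrite eqxx sub1seq.
rewrite in_cons negb_or => /andP[yd yt]; rewrite (negbTE yd).
exact: IH.
Qed.

Lemma nbad_prefix k a w :
  (forall y z, subseq [:: y; z] w -> ~~ cond a y z) -> ~ bad w -> ~ bad (nseq k a ++ w).
Proof.
move=> H nb; elim: k => //= k IH /bad_cons [[y [z [ss cc]]]|//].
have ya : y != a by move: cc; rewrite /cond => /andP[ya _]; rewrite ltn_eqF.
by move: (H y z (@sub2_nseq k a y z w ss ya)); rewrite cc.
Qed.

Lemma nbad_prefix_min k a w :
  (forall y, y \in w -> a <= y) -> ~ bad w -> ~ bad (nseq k a ++ w).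
Proof.
move=> H; apply: nbad_prefix => y z ss; rewrite /cond negb_and -leqNgt.
by rewrite H // (mem_subseq ss) // in_cons eqxx.
Qed.

Lemma nbad_snoc_min s c :
  (forall y, y \in s -> c < y) -> ~ bad s -> ~ bad (rcons s c).
Proof.
move=> H nb /bad_snoc [//|[x [y [ss cc]]]].
have hx : c < x by apply: H; rewrite (mem_subseq ss) // in_cons eqxx.
have hy : c < y by apply: H; rewrite (mem_subseq ss) // !in_cons eqxx orbT.
by move: cc; rewrite /cond; lia.
Qed.


Ltac fin := rewrite ?ltnS /=; repeat (case: ifP => ?); lia.

Definition isPerm (m n : nat) (w : seq nat) :=
  forall x, count_mem x w = (if (0 < x) && (x <= n) then m else 0).

Lemma count_map_succ x (s : seq nat) :
  count_mem x (map succn s) = if x is x'.+1 then count_mem x' s else 0.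
Proof. elim: s => [|a s IH] /=; first by case: x. by rewrite IH; clear IH; case: x. Qed.

Definition fA m (w : seq nat) := nseq m.-1 1 ++ rcons (map succn w) 1.
Definition fB m (w : seq nat) := nseq m 1 ++ map succn w.
Definition fC m (w : seq nat) :=
  nseq m.-1 1 ++ (nseq m.-1 2 ++ rcons (rcons (map succn (map succn w)) 1) 2).
Definition f2 m j := nseq m.-1 1 ++ (nseq j 2 ++ 1 :: nseq (m - j) 2).

Fixpoint Lw m n : seq (seq nat) :=
  match n with
  | 0 => [:: [::]]
  | 1 => [:: nseq m 1]
  | 2 => map (f2 m) (iota 0 m.+1)
  | S (S (S k as r) as q) => map (fA m) (Lw m q) ++ map (fB m) (Lw m q) ++ map (fC m) (Lw m r)
  end.

Lemma isPerm_ge1 m n w : isPerm m n w -> forall y, y \in w -> 0 < y.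
Proof.
move=> H [|y] //; rewrite -has_pred1 has_count.
by have := H 0; rewrite /= => ->.
Qed.

Arguments isPerm_ge1 {m n w}.

Lemma permA m n w : 0 < m -> isPerm m n w -> isPerm m n.+1 (fA m w).
Proof.
move=> m0 H x; rewrite /fA -cats1 !count_cat count_nseq count_map_succ /=.
case: x => [|x] /=; first by lia.
rewrite H; case: x => [|x] /=; first by lia.
fin.
Qed.

Lemma permB m n w : isPerm m n w -> isPerm m n.+1 (fB m w).
Proof.
move=> H x; rewrite /fB !count_cat count_nseq count_map_succ /=.
case: x => [|x] /=; first by lia.
rewrite H; case: x => [|x] /=; first by lia.
fin.
Qed.

Lemma permC m n w : 0 < m -> isPerm m n w -> isPerm m n.+2 (fC m w).
Proof.
move=> m0 H x; rewrite /fC -!cats1 !count_cat !count_nseq !count_map_succ /=.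
case: x => [|x] /=; first by lia.
rewrite !count_map_succ /=.
case: x => [|x] /=; first by lia.
rewrite H; case: x => [|x] /=; first by lia.
fin.
Qed.

Lemma perm2 m j : j <= m -> 0 < m -> isPerm m 2 (f2 m j).
Proof.
move=> jm m0 x; rewrite /f2 !count_cat /= !count_nseq.
case: x => [|[|[|x]]] /=; lia.
Qed.

Lemma perm1 m : isPerm m 1 (nseq m 1).
Proof. by move=> x; rewrite count_nseq; case: x => [|[|x]] /=; lia. Qed.

Lemma perm0 m : isPerm m 0 [::].
Proof. by move=> x; case: x. Qed.

Lemma mem_map_succ y (w : seq nat) : y \in map succn w -> exists2 x, x \in w & y = x.+1.
Proof. by case/mapP => x xw ->; exists x. Qed.

Lemma nbadA m n w : isPerm m n w -> ~ bad w -> ~ bad (fA m w).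
Proof.
move=> H nb; rewrite /fA; apply: nbad_prefix_min.
- move=> y; rewrite mem_rcons in_cons => /orP[/eqP -> //|/mem_map_succ [x _ ->]] //.
- apply: nbad_snoc_min; last by move/bad_map_succ.
  move=> y /mem_map_succ [x xw ->]; have := isPerm_ge1 H _ xw; lia.
Qed.

Lemma nbadB m w : ~ bad w -> ~ bad (fB m w).
Proof.
move=> nb; rewrite /fB; apply: nbad_prefix_min; last by move/bad_map_succ.
by move=> y /mem_map_succ [x _ ->].
Qed.

Lemma nbadC m n w : isPerm m n w -> ~ bad w -> ~ bad (fC m w).
Proof.
move=> H nb.
have HS : forall y, y \in map succn (map succn w) -> 2 < y.
  move=> y /mem_map_succ [x /mem_map_succ [x' x'w ->] ->].
  have := isPerm_ge1 H _ x'w; lia.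
have nbS : ~ bad (map succn (map succn w)) by move/bad_map_succ/bad_map_succ.
have H1 : forall y, y \in rcons (map succn (map succn w)) 1 -> (y == 1) || (2 < y).
  by move=> y; rewrite mem_rcons in_cons => /orP[->//|/HS ->]; rewrite orbT.
have nb1 : ~ bad (rcons (map succn (map succn w)) 1).
  apply: nbad_snoc_min => // y /HS; lia.
have nb2 : ~ bad (rcons (rcons (map succn (map succn w)) 1) 2).
  move/bad_snoc => [//|[x [y [ss cc]]]].
  have hx : (x == 1) || (2 < x) by apply: H1; apply: (mem_subseq ss); rewrite !inE eqxx.
  have hy : (y == 1) || (2 < y) by apply: H1; apply: (mem_subseq ss); rewrite !inE eqxx orbT.
  by move: cc hx hy; rewrite /cond; lia.
rewrite /fC; apply: nbad_prefix_min.
- move=> y; rewrite mem_cat => /orP[|].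
  + by rewrite mem_nseq => /andP[_ /eqP ->].
  + by rewrite mem_rcons in_cons => /orP[/eqP ->//|/H1]; lia.
- apply: nbad_prefix => // y z ss; rewrite /cond.
  apply/negP => /andP[y2 zc].
  have /H1 hy : y \in rcons (map succn (map succn w)) 1.
    have := mem_subseq ss (mem_head _ _); rewrite mem_rcons in_cons => /orP[/eqP y2'|//].
    by move: y2; rewrite y2'.
  have ey : y = 1 by move: hy y2; lia.
  subst y.
  have zin : z \in [:: 2].
    apply: (@sub2_split 1 z (map succn (map succn w)) [:: 2]).
    - by apply/negP => /HS.
    - by move: ss; rewrite -!cats1 -catA.
  by move: zc; rewrite inE in zin; rewrite (eqP zin).
Qed.

Lemma nbad_nseq k a : ~ bad (nseq k a).
Proof. rewrite -[nseq k a]cats0; apply: nbad_prefix_min => //; exact: nbad_nil. Qed.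

Lemma nbad2 m j : ~ bad (f2 m j).
Proof.
rewrite /f2; apply: nbad_prefix_min.
- move=> y; rewrite !mem_cat in_cons !mem_nseq.
  by case/orP => [/andP[_ /eqP ->]|/orP[/eqP ->|/andP[_ /eqP ->]]].
- apply: nbad_prefix.
  + move=> y z ss; rewrite /cond; apply/negP => /andP[y2 zc].
    have hy : y \in 1 :: nseq (m - j) 2 by apply: (mem_subseq ss); rewrite !inE eqxx.
    have ey : y = 1.
      move: hy; rewrite in_cons mem_nseq => /orP[/eqP //|/andP[_ /eqP e]].
      by move: y2; rewrite e.
    subst y.
    have := @sub2_split 1 z [::] (nseq (m - j) 2) isT ss.
    rewrite mem_nseq => /andP[_ /eqP ez].
    by move: zc; rewrite ez.
  + have -> : 1 :: nseq (m - j) 2 = nseq 1 1 ++ nseq (m - j) 2 by [].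
    apply: nbad_prefix_min; last exact: nbad_nseq.
    by move=> y; rewrite mem_nseq => /andP[_ /eqP ->].
Qed.

Lemma Lw_sound m : 0 < m -> forall n w, w \in Lw m n -> isPerm m n w /\ ~ bad w.
Proof.
move=> m0.
have step : forall n, (forall w, w \in Lw m n -> isPerm m n w /\ ~ bad w) /\
                      (forall w, w \in Lw m n.+1 -> isPerm m n.+1 w /\ ~ bad w) /\
                      (forall w, w \in Lw m n.+2 -> isPerm m n.+2 w /\ ~ bad w).
  elim=> [|n [_ [IH1 IH2]]].
  - split; [|split].
    + by move=> w; rewrite inE => /eqP ->; split; [exact: perm0|exact: nbad_nil].
    + by move=> w; rewrite inE => /eqP ->; split; [exact: perm1|exact: nbad_nseq].
    + move=> w /mapP [j]; rewrite mem_iota => /andP[_ jm] ->; split.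
      * by apply: perm2.
      * exact: nbad2.
  - split => //; split => //.
    move=> w /=; rewrite !mem_cat => /orP[/mapP [w' /IH2 [p nb] ->]|/orP[]].
    + by split; [apply: permA|apply: nbadA p nb].
    + case/mapP => w' /IH2 [p nb] ->.
      by split; [apply: permB|apply: nbadB].
    + case/mapP => w' /IH1 [p nb] ->.
      by split; [apply: permC|apply: nbadC p nb].
by move=> n; case: (step n).
Qed.


Lemma nseq_all (a : nat) w : (forall x, x \in w -> x = a) -> w = nseq (size w) a.
Proof. move=> H; apply/all_pred1P; apply/allP => x /H -> /=; exact: eqxx. Qed.

Lemma sub2_count (a : nat) r : 1 < count_mem a r -> subseq [:: a; a] r.
Proof.
elim: r => //= d r IH.
case: (eqVneq a d) => [ad|ad] /=.
- subst d; move=> h; rewrite sub1seq -has_pred1 has_count; move: h; rewrite /=; lia.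
- by move=> /IH.
Qed.

Lemma split_first (a : nat) w : has (fun x => x != a) w ->
  exists k b r, w = nseq k a ++ b :: r /\ b != a.
Proof.
elim: w => //= c w IH.
case: (eqVneq c a) => [ca|ca] /=.
- move=> /IH [k [b [r [-> ba]]]]; exists k.+1, b, r; split => //.
  by rewrite ca.
- by move=> _; exists 0, c, w.
Qed.

Lemma decomp (a m : nat) w : 0 < m -> ~ bad w -> (forall x, x \in w -> a <= x) ->
  count_mem a w = m -> has (fun x => x != a) w ->
  (exists r, w = nseq m a ++ r /\ a \notin r /\ r != [::]) \/
  (exists u r2, w = nseq m.-1 a ++ u ++ a :: r2 /\ a \notin u /\ a \notin r2 /\
     u != [::] /\ (forall x z, x \in u -> z \in r2 -> z <= x)).
Proof.
move=> m0 nb ge cnt /split_first [k [b [r [ew ba]]]].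
have ab : a < b.
  have : a <= b by apply: ge; rewrite ew mem_cat in_cons eqxx orbT.
  by rewrite leq_eqVlt eq_sym (negbTE ba).
have cw : count_mem a w = k + count_mem a r.
  rewrite ew count_cat count_nseq /= eqxx (_ : (b == a) = false); [lia|exact/negbTE].
have cr : count_mem a r <= 1.
  rewrite leqNgt; apply/negP => /sub2_count sr; apply: nb.
  exists b, a, a; split; last by rewrite /cond ab eqxx.
  rewrite ew; apply: (subseq_trans _ (suffix_subseq _ _)).
  by rewrite /= eqxx.
case: (posnP (count_mem a r)) => [c0|c1].
- left; exists (b :: r); split; first by rewrite ew; congr (nseq _ _ ++ _); lia.
  split => //; rewrite in_cons negb_or eq_sym ba /=.
  exact/count_memPn.
- right.
  have ar : a \in r by rewrite -has_pred1 has_count.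
  case/splitPr: ar cr c1 cw ew => r1 r2.
  rewrite count_cat /= eqxx => cr c1 cw ew.
  have e1 : forall x, true + x = x.+1 by []. rewrite !e1 in cr c1 cw.
  have cr' : count_mem a r1 + (count_mem a r2).+1 <= 1 := cr.
  have h1 : count_mem a r1 = 0 by lia.
  have h2 : count_mem a r2 = 0 by lia.
  have n1 : a \notin r1 by apply/count_memPn.
  have n2 : a \notin r2 by apply/count_memPn.
  have ek : k = m.-1 by move: cw; rewrite cnt h1 h2; lia.
  exists (b :: r1), r2; split.
    by rewrite ew ek.
  split; first by rewrite in_cons negb_or eq_sym ba.
  split => //; split => //.
  move=> x z xu zr; rewrite leqNgt; apply/negP => xz; apply: nb.
  exists x, a, z; split.
  + rewrite ew; apply: (subseq_trans _ (suffix_subseq _ _)).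
    rewrite -cat1s -cat_cons.
    apply: cat_subseq; first by rewrite sub1seq.
    by rewrite /= eqxx sub1seq.
  + rewrite /cond xz orbT andbT.
    have : a <= x.
      apply: ge; rewrite ew mem_cat in_cons mem_cat.
      by move: xu; rewrite in_cons => /orP[->|->]; rewrite ?orbT.
    rewrite leq_eqVlt => /orP[/eqP ax|//].
    by move: xu; rewrite -ax in_cons eq_sym (negbTE ba) (negbTE n1).
Qed.


Lemma succ_pred (u : seq nat) : (forall y, y \in u -> 0 < y) -> map succn (map predn u) = u.
Proof.
elim: u => //= a u IH H; rewrite IH; last by move=> y yu; apply: H; rewrite in_cons yu orbT.
by have := H a (mem_head _ _); clear; case: a.
Qed.

Lemma shift1 m n w u : (forall y, y \in u -> 1 < y) ->
  (forall y, 1 < y -> count_mem y w = count_mem y u) -> isPerm m n.+1 w ->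
  isPerm m n (map predn u) /\ u = map succn (map predn u).
Proof.
move=> Hu Hc Hw.
have eu : map succn (map predn u) = u by apply: succ_pred => y /Hu; lia.
split => // x.
have -> : count_mem x (map predn u) = count_mem x.+1 u by rewrite -{2}eu count_map_succ.
case: x => [|x].
- apply/count_memPn; apply/negP => /Hu; lia.
- rewrite -Hc // Hw; fin.
Qed.

Lemma shift2 m n w u : (forall y, y \in u -> 2 < y) ->
  (forall y, 2 < y -> count_mem y w = count_mem y u) -> isPerm m n.+2 w ->
  isPerm m n (map predn (map predn u)) /\ u = map succn (map succn (map predn (map predn u))).
Proof.
move=> Hu Hc Hw.
have eu1 : map succn (map predn u) = u by apply: succ_pred => y /Hu; lia.
have eu2 : map succn (map predn (map predn u)) = map predn u.
  apply: succ_pred => y /mapP [z /Hu zu ->]; lia.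
split; last by rewrite eu2 eu1.
move=> x.
have -> : count_mem x (map predn (map predn u)) = count_mem x.+2 u.
  by rewrite -{2}eu1 -{2}eu2 !count_map_succ.
case: x => [|x].
- apply/count_memPn; apply/negP => /Hu; lia.
- rewrite -Hc // Hw; fin.
Qed.

Lemma perm_nil m w : isPerm m 0 w -> w = [::].
Proof.
case: w => // c w H; have := H c; rewrite /= eqxx; case: ifP => [/andP[]|]; lia.
Qed.

Lemma mem_isPerm m n w x : isPerm m n w -> x \in w -> (0 < x) && (x <= n).
Proof.
move=> H xw; move: (H x); case: ifP => // _.
move: xw; rewrite -has_pred1 has_count => h e; by move: h; rewrite e.
Qed.

Lemma has_isPerm m n w x : 0 < m -> isPerm m n w -> 0 < x -> x <= n -> x \in w.
Proof.
move=> m0 H x0 xn; rewrite -has_pred1 has_count.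
have := H x; rewrite x0 xn /= => ->; lia.
Qed.

Lemma nseq_shift k (a : nat) t : nseq k a ++ a :: t = nseq k.+1 a ++ t.
Proof. by elim: k => //= k ->. Qed.

Lemma last_in (s t : seq nat) : t != [::] -> last 0 (s ++ t) \in t.
Proof. by case: t => // c t _; rewrite last_cat /= mem_last. Qed.

Arguments perm_nil {m w}.
Arguments shift1 {m n w u}.
Arguments shift2 {m n w u}.
Arguments decomp {a m w}.
Arguments nseq_all {a w}.
Arguments mem_isPerm {m n w x}.
Arguments has_isPerm {m n w x}.

Lemma last_in2 (s t : seq nat) x : t != [::] -> last 0 (s ++ x :: t) \in t.
Proof. by case: t => // c t _; rewrite last_cat /= mem_last. Qed.

Lemma neq_false (a b : nat) : a != b -> (a == b) = false.
Proof. exact: negbTE. Qed.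

Lemma Lw_complete m : 1 < m -> forall n w, isPerm m n w -> ~ bad w -> w \in Lw m n.
Proof.
move=> m2; have m0 : 0 < m by lia.
move=> n; elim: n {-2}n (leqnn n) => [|N IH] n nN w Hw nb.
  by move: nN; rewrite leqn0 => /eqP n0; subst n; rewrite (perm_nil Hw) inE.
have ge1 : forall x, x \in w -> 1 <= x by move=> x /(mem_isPerm Hw) /andP[].
case: n nN Hw ge1 => [|n] nN Hw ge1; first by rewrite (perm_nil Hw) inE.
have cnt1 : count_mem 1 w = m by rewrite Hw.
case: n nN Hw cnt1 ge1 => [|[|k]] nN Hw cnt1 ge1.
- have all1 : forall x, x \in w -> x = 1 by move=> x /(mem_isPerm Hw); lia.
  have ew := nseq_all all1.
  by move: cnt1; rewrite ew count_nseq /= mul1n => ->; rewrite inE.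
- have has2 : has (fun x => x != 1) w.
    by apply/hasP; exists 2 => //; apply: (has_isPerm m0 Hw).
  have cnt2 : count_mem 2 w = m by rewrite Hw.
  case: (decomp m0 nb ge1 cnt1 has2) => [[r [ew [n1 rn]]]|[u [r2 [ew [n1 [n2 [un H]]]]]]].
  + have r2 : forall x, x \in r -> x = 2.
      move=> x xr; have : x \in w by rewrite ew mem_cat xr orbT.
      move/(mem_isPerm Hw); have : x != 1 by apply: contraNneq n1 => <-.
      lia.
    have er := nseq_all r2.
    have sr : size r = m.
      by move: cnt2; rewrite ew count_cat {1}er !count_nseq /=; lia.
    apply/mapP; exists 0; first by rewrite mem_iota; lia.
    by rewrite /f2 /= subn0 nseq_shift prednK // ew er sr.
  + have all2 : forall x, x \in u ++ r2 -> x = 2.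
      move=> x xr; have : x \in w by rewrite ew !mem_cat in_cons; move: xr; rewrite mem_cat => /orP[->|->]; rewrite ?orbT.
      move/(mem_isPerm Hw); have : x != 1.
        by apply/eqP => x1; move: xr; rewrite x1 mem_cat (negbTE n1) (negbTE n2).
      lia.
    have eu : u = nseq (size u) 2 by apply: nseq_all => x xu; apply: all2; rewrite mem_cat xu.
    have er : r2 = nseq (size r2) 2 by apply: nseq_all => x xu; apply: all2; rewrite mem_cat xu orbT.
    have su : size u + size r2 = m.
      by move: cnt2; rewrite ew !count_cat /= {1}eu {1}er !count_nseq /=; lia.
    have su0 : 0 < size u by case: u un {eu ew all2 n1 H su}.
    apply/mapP; exists (size u); first by rewrite mem_iota; lia.
    by rewrite /f2 ew {1}eu {1}er; do 2 congr (_ ++ _); congr (_ :: nseq _ _); lia.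
- have IH2 : forall w, isPerm m k.+2 w -> ~ bad w -> w \in Lw m k.+2.
    by move=> w' Hw' nb'; apply: IH => //; lia.
  have IH1 : forall w, isPerm m k.+1 w -> ~ bad w -> w \in Lw m k.+1.
    by move=> w' Hw' nb'; apply: IH => //; lia.
  have has2 : has (fun x => x != 1) w.
    by apply/hasP; exists 2 => //; apply: (has_isPerm m0 Hw).
  case: (decomp m0 nb ge1 cnt1 has2) => [[r [ew [n1 rn]]]|[u [r2 [ew [n1 [n2 [un H]]]]]]].
  +
    have gr : forall y, y \in r -> 1 < y.
      move=> y yr; have : 1 <= y by apply: ge1; rewrite ew mem_cat yr orbT.
      have : y != 1 by apply: contraNneq n1 => <-.
      lia.
    have [Hp er] : isPerm m k.+2 (map predn r) /\ r = map succn (map predn r).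
      apply: (shift1 gr _ Hw) => y y1.
      rewrite ew count_cat count_nseq /=.
      by have -> : (1 == y) = false by apply/negbTE/eqP; lia.
    have nb' : ~ bad (map predn r).
      move/bad_map_succ; rewrite -er => br; apply: nb; apply: bad_sub br.
      by rewrite ew suffix_subseq.
    rewrite /= !mem_cat; apply/orP; right; apply/orP; left.
    by apply/mapP; exists (map predn r); [apply: IH2|rewrite /fB -er ew].
  + have gu : forall y, y \in u -> 1 < y.
      move=> y yu; have : 1 <= y by apply: ge1; rewrite ew !mem_cat yu orbT.
      have : y != 1 by apply: contraNneq n1 => <-.
      lia.
    case: (eqVneq r2 [::]) => [r20|r2n].
    *
      subst r2.
      have [Hp eu] : isPerm m k.+2 (map predn u) /\ u = map succn (map predn u).
        apply: (shift1 gu _ Hw) => y y1.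
        rewrite ew !count_cat count_nseq /=.
        have -> : (1 == y) = false by apply/negbTE/eqP; lia.
        by rewrite /= !addn0.
      have nb' : ~ bad (map predn u).
        move/bad_map_succ; rewrite -eu => br; apply: nb; apply: bad_sub br.
        rewrite ew; apply: (subseq_trans _ (suffix_subseq _ _)).
        exact: prefix_subseq.
      rewrite /= !mem_cat; apply/orP; left.
      by apply/mapP; exists (map predn u); [apply: IH2|rewrite /fA -eu ew cats1].
    *
      set v := u ++ r2.
      have vsub : subseq v w.
        rewrite ew; apply: (subseq_trans _ (suffix_subseq _ _)).
        exact: cat_subseq (subseq_refl u) (subseq_cons r2 1).
      have nbv : ~ bad v by move=> bv; apply: nb; apply: bad_sub bv.
      have gev : forall y, y \in v -> 2 <= y.
        move=> y yv; have : 1 <= y by apply: ge1; apply: (mem_subseq vsub).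
        have : y != 1.
          by apply/eqP => y1; move: yv; rewrite y1 mem_cat (negbTE n1) (negbTE n2).
        lia.
      have cv : count_mem 2 v = m.
        transitivity (count_mem 2 w); last by rewrite Hw.
        by rewrite ew /v !count_cat count_nseq.
      have w3 : 3 \in w by apply: (has_isPerm m0 Hw).
      have v3 : 3 \in v.
        move: w3; rewrite /v ew !mem_cat mem_nseq in_cons ?mem_cat.
        by case: (3 \in u); case: (3 \in r2); rewrite /= ?andbF.
      have hv : has (fun x => x != 2) v by apply/hasP; exists 3.
      case Eu: u un => [|b u1] // _.
      have hb : b = 2.
        case: (decomp m0 nbv gev cv hv) => [[r' [ev _]]|[u' [r2' [ev _]]]].
        - by move: ev; rewrite /v Eu; case: (m) m0 => //= m' _ [].
        - by move: ev; rewrite /v Eu; case: (m) m2 => [|[|m']] //= _ [].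
      subst b.
      have r2all : forall z, z \in r2 -> z = 2.
        move=> z zr; have u2 : 2 \in u by rewrite Eu mem_head.
        have := H 2 z u2 zr.
        have := gev z; rewrite /v mem_cat zr orbT => /(_ isT); lia.
      have lv : last 0 v \in r2 by apply: last_in.
      have lv2 : last 0 v = 2 by apply: r2all.
      case: (decomp m0 nbv gev cv hv) => [[r' [ev [n2r' r'n]]]|[u' [r2' [ev [n2u' [n2r2' [u'n H']]]]]]].
      - exfalso; have : last 0 v \in r'.
          by rewrite ev; apply: last_in.
        by rewrite lv2 (negbTE n2r').
      - have r2'0 : r2' = [::].
          apply/eqP; apply: contraNT n2r2' => r2'n.
          by rewrite -lv2 ev catA; apply: last_in2.
        subst r2'.
        have er := nseq_all r2all.
        have sr : size r2 = 1.
          have s1 : 0 < size r2 by case: (r2) r2n.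
          apply/eqP; rewrite eqn_leq s1 andbT leqNgt; apply/negP => s2.
          apply: nb; exists 3, 2, 2; split => //.
          rewrite ew; apply: (subseq_trans _ (suffix_subseq _ _)).
          rewrite -[ [:: 3; 2; 2] ]/([:: 3] ++ [:: 2; 2]); apply: cat_subseq.
          - rewrite sub1seq; move: v3; rewrite /v mem_cat => /orP[//|/r2all]; discriminate.
          - rewrite /=; apply: sub2_count; rewrite {1}er count_nseq /= mul1n //.
        have er2 : r2 = [:: 2] by rewrite er sr.
        have e : u ++ [:: 2] = nseq m.-1 2 ++ u' ++ [:: 2] by rewrite -ev /v er2.
        move: e; rewrite catA !cats1 => /rcons_inj [eu].
        have gu' : forall y, y \in u' -> 2 < y.
          move=> y yu; have := gev y; rewrite ev !mem_cat yu orbT => /(_ isT).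
          have : y != 2 by apply: contraNneq n2u' => <-.
          lia.
        have [Hp e2] : isPerm m k.+1 (map predn (map predn u')) /\
                       u' = map succn (map succn (map predn (map predn u'))).
          apply: (shift2 gu' _ Hw) => y y2.
          rewrite ew eu er2 !count_cat !count_nseq /=.
          have -> : (1 == y) = false by apply/negbTE/eqP; lia.
          have -> : (2 == y) = false by apply/negbTE/eqP; lia.
          by rewrite /= !addn0.
        have nb' : ~ bad (map predn (map predn u')).
          move=> bw; apply: nbv; apply: (@bad_sub u').
          + rewrite ev; apply: (subseq_trans _ (suffix_subseq _ _)).
            exact: prefix_subseq.
          + by rewrite e2; apply/bad_map_succ/bad_map_succ.
        rewrite /= !mem_cat; apply/orP; right; apply/orP; right.
        apply/mapP; exists (map predn (map predn u')); first by apply: IH1.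
        by rewrite /fC -e2 ew eu er2 -!cats1 -!catA.
Qed.


Lemma catI (s a b : seq nat) : s ++ a = s ++ b -> a = b.
Proof. by elim: s => //= x s IH [] /IH. Qed.

Lemma idx2 m j : index 1 (drop m.-1 (f2 m j)) = j.
Proof.
rewrite /f2 drop_size_cat ?size_nseq // index_cat mem_nseq andbF size_nseq /=.
by rewrite addn0.
Qed.

Lemma fA_inj m : injective (fA m).
Proof. by move=> a b /catI/rcons_inj [] /(inj_map succn_inj). Qed.

Lemma fB_inj m : injective (fB m).
Proof. by move=> a b /catI/(inj_map succn_inj). Qed.

Lemma fC_inj m : injective (fC m).
Proof.
move=> a b /catI/catI/rcons_inj [] /rcons_inj [] /(inj_map succn_inj).
exact: (inj_map succn_inj).
Qed.

Lemma lastA m w : last 0 (fA m w) = 1.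
Proof. by rewrite /fA last_cat last_rcons. Qed.

Lemma lastC m w : last 0 (fC m w) = 2.
Proof. by rewrite /fC !last_cat last_rcons. Qed.

Lemma lastB m n w : 0 < m -> w \in Lw m n.+1 -> 1 < last 0 (fB m w).
Proof.
move=> m0 wL; have [Hp _] := @Lw_sound m m0 _ _ wL.
have wn : map succn w != [::].
  by case: w {wL} Hp => // Hp; have := Hp 1; rewrite /=; lia.
have := @last_in (nseq m 1) _ wn; rewrite -/(fB m w).
move=> /mapP [x xw ->]; have := isPerm_ge1 Hp _ xw; lia.
Qed.

Lemma nthB m w : 0 < m -> nth 0 (fB m w) m.-1 = 1.
Proof. by move=> m0; rewrite /fB nth_cat size_nseq (ltn_predL m) m0 nth_nseq (ltn_predL m) m0. Qed.

Lemma nthC m w : 1 < m -> nth 0 (fC m w) m.-1 = 2.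
Proof.
move=> m1; rewrite /fC nth_cat size_nseq ltnn subnn nth_cat size_nseq.
by case: m m1 => [|[|m]] //= _; rewrite nth_nseq.
Qed.

Lemma Lw_uniq m : 1 < m -> forall n, uniq (Lw m n).
Proof.
move=> m2.
have m0 : 0 < m by lia.
have step : forall n, uniq (Lw m n) /\ uniq (Lw m n.+1) /\ uniq (Lw m n.+2).
  elim=> [|n [_ [U1 U2]]].
  - split => //; split => //.
    have -> : Lw m 2 = map (f2 m) (iota 0 m.+1) by [].
    rewrite map_inj_uniq ?iota_uniq //.
    by move=> i j e; rewrite -(idx2 m i) -(idx2 m j) e.
  - split => //; split => //.
    have -> : Lw m n.+3 = map (fA m) (Lw m n.+2) ++ map (fB m) (Lw m n.+2) ++ map (fC m) (Lw m n.+1) by [].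
    rewrite !cat_uniq !(map_inj_uniq (fA_inj m)) !(map_inj_uniq (fB_inj m)) !(map_inj_uniq (fC_inj m)) U1 U2 !andTb !andbT.
    apply/andP; split.
    + apply/hasPn => x; rewrite mem_cat => /orP[] /mapP [w wL ->].
      * apply/mapP => [[w' _ e]].
        have := @lastB m _ _ m0 wL; rewrite e lastA; lia.
      * apply/mapP => [[w' _ e]].
        by have := lastC m w; rewrite e lastA.
    + apply/hasPn => x /mapP [w wL ->].
      apply/mapP => [[w' _ e]].
      by have := nthC m w m2; rewrite e nthB.
by move=> n; case: (step n).
Qed.


Lemma count_ms n m x :
  count_mem x (multiset_nm n m) = if (0 < x) && (x <= n) then m else 0.
Proof.
elim: n => [|n IH]; first by rewrite /multiset_nm /=; case: ifP; lia.
have -> : multiset_nm n.+1 m = multiset_nm n m ++ nseq m n.+1.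
  by rewrite /multiset_nm -[n.+1]addn1 iotaD map_cat flatten_cat /= cats0 addnC.
rewrite count_cat IH count_nseq /=.
case: (eqVneq n.+1 x) => [<-|nx] /=; first by rewrite ltnn /=; fin.
fin.
Qed.

Lemma permE n m w : perm_eq w (multiset_nm n m) <-> isPerm m n w.
Proof.
split.
- by move/permP => H x; rewrite -count_ms; apply: H.
- move=> H; apply/allP => y _ /=; by rewrite H count_ms.
Qed.

Lemma s_nm_size n m : 1 < m ->
  s_nm n m [:: [:: 2; 1; 1]; [:: 2; 1; 3]] = size (Lw m n).
Proof.
move=> m2; have m0 : 0 < m by lia.
rewrite /s_nm -size_filter; apply: perm_size; apply: uniq_perm.
- by rewrite filter_uniq // permutations_uniq.
- exact: Lw_uniq.
- move=> w; rewrite mem_filter mem_permutations.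
  apply/andP/idP.
  + move=> [/avoidsE nb /permE p]; exact: Lw_complete.
  + move=> wL; have [p nb] := @Lw_sound m m0 _ _ wL.
    by split; [apply/avoidsE|apply/permE].
Qed.

Lemma size_Lw m k : size (Lw m k.+3) = 2 * size (Lw m k.+2) + size (Lw m k.+1).
Proof.
have -> : Lw m k.+3 = map (fA m) (Lw m k.+2) ++ map (fB m) (Lw m k.+2) ++ map (fC m) (Lw m k.+1) by [].
rewrite !size_cat !size_map; lia.
Qed.


Import Order.TTheory GRing.Theory Num.Theory.
Local Open Scope ring_scope.

Lemma closed_form (R : rcfType) (m : nat) (a : nat -> nat) :
  a 1%N = 1%N -> a 2%N = m.+1 ->
  (forall k, a k.+3 = 2 * a k.+2 + a k.+1)%N ->
  forall k, (a k.+1)%:R =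
  4%:R^-1 * ((2%:R - m%:R * Num.sqrt 2%:R) * (1 - Num.sqrt 2%:R) ^+ k
           + (2%:R + m%:R * Num.sqrt 2%:R) * (1 + Num.sqrt 2%:R) ^+ k) :> R.
Proof.
move=> a1 a2 arec.
set s := Num.sqrt (2%:R : R).
have ss : s * s = 2%:R by rewrite -expr2 sqr_sqrtr // ler0n.
have h4 : (4%:R : R) != 0 by rewrite pnatr_eq0.
have q1 : (1 - s) ^+ 2 = 2%:R * (1 - s) + 1.
  apply/eqP; rewrite -subr_eq0.
  have -> : (1 - s) ^+ 2 - (2%:R * (1 - s) + 1) = s * s - 2%:R by ring.
  by rewrite ss subrr.
have q2 : (1 + s) ^+ 2 = 2%:R * (1 + s) + 1.
  apply/eqP; rewrite -subr_eq0.
  have -> : (1 + s) ^+ 2 - (2%:R * (1 + s) + 1) = s * s - 2%:R by ring.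
  by rewrite ss subrr.
set F := fun k => 4%:R^-1 * ((2%:R - m%:R * s) * (1 - s) ^+ k + (2%:R + m%:R * s) * (1 + s) ^+ k).
have F0 : F 0%N = 1.
  rewrite /F !expr0 !mulr1.
  have -> : 2%:R - m%:R * s + (2%:R + m%:R * s) = 4%:R :> R by rewrite -[4%N]/(2 + 2)%N natrD; ring.
  by rewrite mulVf.
have F1 : F 1%N = m.+1%:R.
  rewrite /F !expr1.
  have -> : (2%:R - m%:R * s) * (1 - s) + (2%:R + m%:R * s) * (1 + s) = 4%:R + 2%:R * m%:R * (s * s) :> R.
    by rewrite -[4%N]/(2 + 2)%N natrD; ring.
  rewrite ss -[m.+1]addn1 natrD; by field.
have Frec : forall k, F k.+2 = 2%:R * F k.+1 + F k.
  move=> k; rewrite /F -[k.+2]addn2 -[k.+1]addn1 !exprD q1 q2 expr1; ring.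
have : forall k, (a k.+1)%:R = F k /\ (a k.+2)%:R = F k.+1.
  elim=> [|k [IH1 IH2]]; first by rewrite a1 a2 F0 F1.
  split => //; rewrite arec natrD natrM IH1 IH2 Frec //.
by move=> H k; case: (H k).
Qed.

Theorem mainTheorem11 (R : rcfType) (m n : nat) :
  (2 <= m)%N -> (1 <= n)%N ->
  ((s_nm n m [:: [:: 2; 1; 1]; [:: 2; 1; 3]]%N)%:R : R) =
  4%:R^-1 * ((2%:R - m%:R * Num.sqrt 2%:R) * (1 - Num.sqrt 2%:R) ^+ (n - 1)
           + (2%:R + m%:R * Num.sqrt 2%:R) * (1 + Num.sqrt 2%:R) ^+ (n - 1)).
Proof.
move=> m2 n1; rewrite s_nm_size //.
case: n n1 => // k _; rewrite subn1 /=.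
apply: (@closed_form R m (fun n => size (Lw m n))) => //.
- by rewrite /= size_map size_iota.
- move=> j; exact: size_Lw.
Qed.
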